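(* Let $y\in\mathbb Y$ be such that the Riccati equations with parameter $y$ have a global solution $(\Phi_y,\Psi_y)$, and let $(h,x)\in C^1(\mathbb R_+)\times\mathbb X$ satisfy $h(0)=\ell+\langle\lambda,x\rangle$. Then the equation $h=\mathcal H_y(\theta,x)$, where $$\mathcal H_y(\theta,x)(\tau)=\ell-\int_0^\tau\theta(s)\langle\Psi_y'(\tau-s),e_1\rangle ds-\Phi_y'(\tau)-\langle\Psi_y'(\tau),x\rangle,\quad\tau\ge0,$$ has a unique solution $\theta\in C(\mathbb R_+)$ (denoted $\mathcal C_y(h,x)$).
   Context: $\mathbb X=\mathbb R_+^{d_1}\times\mathbb R^{d_2}$ (up to permutation of coordinates), $d=d_1+d_2\ge1$, $e_1$ the first canonical basis vector, $\langle\cdot,\cdot\rangle$ the Euclidean inner product. For a parameter $y$: symmetric positive semidefinite $a_y,\alpha_y^1,\dots,\alpha_y^d\in\mathbb R^{d\times d}$ and $b_y,\beta_y^1,\dots,\beta_y^d\in\mathbb R^d$. Fix $\ell\in\mathbb R$ and $\lambda\in\mathbb R^d$ with $\langle\lambda,e_1\rangle\neq0$. With $F_y(u)=\tfrac12\langle u,a_yu\rangle+\langle u,b_y\rangle$, $R_y^i(u)=\tfrac12\langle u,\alpha_y^iu\rangle+\langle u,\beta_y^i\rangle$, the Riccati equations are $\Phi_y'=F_y\circ\Psi_y$, $\Phi_y(0)=0$, $\Psi_y'=R_y\circ\Psi_y-\lambda$, $\Psi_y(0)=0$. *)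

(* Defs.v *)
From Stdlib Require Import Reals Lra.
Open Scope R_scope.

(* Vectors of R^d are functions nat -> R (only indices < d matter);
   d x d matrices are functions nat -> nat -> R. Index 0 is the first
   coordinate, so <v, e_1> = v 0. *)
Definition vec := nat -> R.
Definition mat := nat -> nat -> R.

Fixpoint rsum (n : nat) (f : nat -> R) : R :=
  match n with O => 0 | S m => rsum m f + f m end.

Definition inner (d : nat) (u v : vec) : R := rsum d (fun i => u i * v i).
Definition matvec (d : nat) (A : mat) (u : vec) : vec :=
  fun i => rsum d (fun j => A i j * u j).

Definition sym_psd (d : nat) (A : mat) : Prop :=
  (forall i j, (i < d)%nat -> (j < d)%nat -> A i j = A j i) /\
  (forall u : vec, 0 <= inner d u (matvec d A u)).

Definition quadF (d : nat) (a : mat) (b : vec) (u : vec) : R :=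
  / 2 * inner d u (matvec d a u) + inner d u b.

Definition RicR (d : nat) (alpha : nat -> mat) (beta : nat -> vec) (u : vec) : vec :=
  fun i => quadF d (alpha i) (beta i) u.

(* x in X = R_+^{d1} x R^{d2} up to permutation: the coordinates i < d with
   pos i are the nonnegative ones *)
Definition in_X (d : nat) (pos : nat -> Prop) (x : vec) : Prop :=
  forall i, (i < d)%nat -> pos i -> 0 <= x i.

Definition cont_Rplus (f : R -> R) : Prop :=
  forall t, 0 <= t -> forall eps, 0 < eps -> exists delta, 0 < delta /\
    forall s, 0 <= s -> Rabs (s - t) < delta -> Rabs (f s - f t) < eps.

Definition deriv_Rplus (f f' : R -> R) : Prop :=
  forall t, 0 <= t -> forall eps, 0 < eps -> exists delta, 0 < delta /\
    forall s, 0 <= s -> s <> t -> Rabs (s - t) < delta ->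
      Rabs ((f s - f t) / (s - t) - f' t) < eps.

Definition C1_Rplus (f : R -> R) : Prop :=
  exists f', deriv_Rplus f f' /\ cont_Rplus f'.

Definition is_RInt (f : R -> R) (a b v : R) : Prop :=
  exists pr : Riemann_integrable f a b, RiemannInt pr = v.

Definition riccati_global_solution (d : nat) (a : mat) (b : vec)
    (alpha : nat -> mat) (beta : nat -> vec) (lam : vec)
    (Phi : R -> R) (Psi : R -> vec) (dPhi : R -> R) (dPsi : R -> vec) : Prop :=
  deriv_Rplus Phi dPhi /\
  (forall i, (i < d)%nat -> deriv_Rplus (fun t => Psi t i) (fun t => dPsi t i)) /\
  Phi 0 = 0 /\ (forall i, (i < d)%nat -> Psi 0 i = 0) /\
  (forall t, 0 <= t -> dPhi t = quadF d a b (Psi t)) /\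
  (forall t, 0 <= t -> forall i, (i < d)%nat ->
      dPsi t i = RicR d alpha beta (Psi t) i - lam i).

Definition solves_H (d : nat) (l : R) (dPhi : R -> R) (dPsi : R -> vec)
    (h : R -> R) (x : vec) (theta : R -> R) : Prop :=
  forall tau, 0 <= tau -> exists I,
    is_RInt (fun s => theta s * dPsi (tau - s) O) 0 tau I /\
    h tau = l - I - dPhi tau - inner d (dPsi tau) x.

(* Main.v *)
Require Import Defs.
From Stdlib Require Import Reals Lra Lia FunctionalExtensionality.
From Coquelicot Require Import Coquelicot.
Open Scope R_scope.


Lemma rsum_ext n f g : (forall i, (i < n)%nat -> f i = g i) -> rsum n f = rsum n g.
Proof. induction n; simpl; intros H; auto. rewrite IHn by (intros; apply H; lia). rewrite H by lia. auto. Qed.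

Lemma rsum_zero n f : (forall i, (i<n)%nat -> f i = 0) -> rsum n f = 0.
Proof. induction n; simpl; intros H; auto. rewrite IHn by (intros; apply H; lia). rewrite H by lia. ring. Qed.

Lemma rsum_opp n f : rsum n (fun i => - f i) = - rsum n f.
Proof. induction n; simpl. ring. rewrite IHn. ring. Qed.

Definition Cont (F : R -> R) := forall t, continuity_pt F t.

Lemma Cont_continuous F t : Cont F -> continuous F t.
Proof. intros H. apply continuity_pt_filterlim. apply H. Qed.

Lemma Rabs_max_le x t : Rabs (Rmax 0 x - Rmax 0 t) <= Rabs (x - t).
Proof. unfold Rmax; destruct (Rle_dec 0 x); destruct (Rle_dec 0 t); unfold Rabs;
  repeat destruct Rcase_abs; lra. Qed.

Lemma cont_Rplus_max f : cont_Rplus f -> Cont (fun s => f (Rmax 0 s)).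
Proof.
  intros H t eps He.
  destruct (H (Rmax 0 t) (Rmax_l _ _) eps He) as [del [Hd Hs]].
  exists del; split; auto. intros x [_ Hx]. unfold R_dist in *. simpl in *.
  unfold R_dist in *.
  apply Hs. apply Rmax_l. eapply Rle_lt_trans. apply Rabs_max_le. exact Hx.
Qed.

Lemma cont_Rplus_of f g : Cont g -> (forall t, 0 <= t -> f t = g t) -> cont_Rplus f.
Proof.
  intros Hg Heq t Ht eps He.
  destruct (Hg t eps He) as [alp [Ha Hc]]. exists alp; split; auto.
  intros s Hs Hst. rewrite !Heq; auto.
  destruct (Req_dec s t). subst. rewrite Rminus_diag, Rabs_R0; lra.
  apply (Hc s). split. split; [exact I| auto]. exact Hst.
Qed.

Definition ext (f f' : R -> R) (t : R) := if Rlt_dec t 0 then f 0 + f' 0 * t else f t.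

Lemma ext_eq f f' t : 0 <= t -> ext f f' t = f t.
Proof. intros. unfold ext. destruct Rlt_dec; auto; lra. Qed.

Lemma ext_derive f f' : deriv_Rplus f f' -> forall t, is_derive (ext f f') t (f' (Rmax 0 t)).
Proof.
  intros H t. apply is_derive_Reals. intros eps He.
  destruct (Rtotal_order t 0) as [Hlt|[Heq|Hgt]].
  - assert (Hp: 0 < - t) by lra. exists (mkposreal _ Hp). intros h Hh Hha. simpl in Hha.
    unfold ext. destruct (Rlt_dec (t+h) 0); [|exfalso; unfold Rabs in Hha; destruct Rcase_abs in Hha; lra].
    destruct (Rlt_dec t 0); [|lra].
    rewrite Rmax_left by lra.
    replace ((f 0 + f' 0 * (t + h) - (f 0 + f' 0 * t)) / h - f' 0) with 0 by (field; auto).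
    rewrite Rabs_R0; lra.
  - subst. destruct (H 0 (Rle_refl _) eps He) as [del [Hd Hs]].
    exists (mkposreal _ Hd). intros h Hh Hha. simpl in Hha.
    rewrite Rmax_left by lra. rewrite Rplus_0_l.
    unfold ext. destruct (Rlt_dec 0 0); [lra|].
    destruct (Rlt_dec h 0).
    + replace ((f 0 + f' 0 * h - f 0) / h - f' 0) with 0 by (field; auto).
      rewrite Rabs_R0; lra.
    + specialize (Hs h). replace (h - 0) with h in Hs by ring. apply Hs; auto; lra.
  - destruct (H t (Rlt_le _ _ Hgt) eps He) as [del [Hd Hs]].
    assert (Hp: 0 < Rmin del t) by (apply Rmin_pos; lra).
    exists (mkposreal _ Hp). intros h Hh Hha. simpl in Hha.
    rewrite Rmax_right by lra.
    assert (Hh1 : Rabs h < del) by (eapply Rlt_le_trans; [exact Hha| apply Rmin_l]).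
    assert (Hh2 : Rabs h < t) by (eapply Rlt_le_trans; [exact Hha| apply Rmin_r]).
    rewrite !ext_eq by (unfold Rabs in Hh2; destruct Rcase_abs in Hh2; lra).
    specialize (Hs (t+h)). replace (t + h - t) with h in Hs by ring. apply Hs; auto.
    unfold Rabs in Hh2; destruct Rcase_abs in Hh2; lra. lra.
Qed.


Definition CD1 (F F' : R -> R) := (forall t, is_derive F t (F' t)) /\ Cont F'.
Definition CD1ex F := exists F', CD1 F F'.

Lemma CD1_Cont F F' : CD1 F F' -> Cont F.
Proof. intros [H _] t. apply continuity_pt_filterlim. apply (ex_derive_continuous (K:=R_AbsRing) (V:=R_NormedModule)).
  exists (F' t). apply H. Qed.
Lemma C1ex_Cont F : CD1ex F -> Cont F.
Proof. intros [F' H]. eapply CD1_Cont; eauto. Qed.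

Lemma C1ex_const c : CD1ex (fun _ => c).
Proof. exists (fun _ => 0). split. intros; apply is_derive_Reals, derivable_pt_lim_const.
  intros t; apply continuity_pt_const; intros ? ?; auto. Qed.

Lemma C1ex_plus F G : CD1ex F -> CD1ex G -> CD1ex (fun t => F t + G t).
Proof. intros [F' [HF CF]] [G' [HG CG]]. exists (fun t => F' t + G' t). split.
  intros t. apply is_derive_Reals. exact (derivable_pt_lim_plus F G t _ _ (proj1 (is_derive_Reals _ _ _) (HF t)) (proj1 (is_derive_Reals _ _ _) (HG t))).
  intros t. apply continuity_pt_plus; auto. Qed.

Lemma C1ex_minus F G : CD1ex F -> CD1ex G -> CD1ex (fun t => F t - G t).
Proof. intros [F' [HF CF]] [G' [HG CG]]. exists (fun t => F' t - G' t). split.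
  intros t. apply is_derive_Reals. exact (derivable_pt_lim_minus F G t _ _ (proj1 (is_derive_Reals _ _ _) (HF t)) (proj1 (is_derive_Reals _ _ _) (HG t))).
  intros t. apply continuity_pt_minus; auto. Qed.

Lemma C1ex_mult F G : CD1ex F -> CD1ex G -> CD1ex (fun t => F t * G t).
Proof. intros HF0 HG0. pose proof (C1ex_Cont _ HF0) as CF0. pose proof (C1ex_Cont _ HG0) as CG0.
  destruct HF0 as [F' [HF CF]]. destruct HG0 as [G' [HG CG]].
  exists (fun t => F' t * G t + F t * G' t). split.
  intros t. apply is_derive_Reals. exact (derivable_pt_lim_mult F G t _ _ (proj1 (is_derive_Reals _ _ _) (HF t)) (proj1 (is_derive_Reals _ _ _) (HG t))).
  intros t. apply continuity_pt_plus; apply continuity_pt_mult; auto. Qed.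

Lemma C1ex_rsum n (F : nat -> R -> R) : (forall i, (i < n)%nat -> CD1ex (F i)) ->
  CD1ex (fun t => rsum n (fun i => F i t)).
Proof. induction n; intros H; simpl. apply C1ex_const.
  apply C1ex_plus. apply IHn; intros; apply H; lia. apply H; lia. Qed.

Lemma Cont_const c : Cont (fun _ => c).
Proof. intros t; apply continuity_pt_const; intros ? ?; auto. Qed.

Lemma Cont_rsum n (F : nat -> R -> R) : (forall i, (i < n)%nat -> Cont (F i)) ->
  Cont (fun t => rsum n (fun i => F i t)).
Proof. induction n; intros H; simpl. apply Cont_const.
  intros t; apply continuity_pt_plus. apply IHn; intros; apply H; lia. apply H; lia. Qed.

Lemma C1ex_quadF d A B (U : nat -> R -> R) : (forall i, (i<d)%nat -> CD1ex (U i)) ->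
  CD1ex (fun t => quadF d A B (fun i => U i t)).
Proof. intros H. unfold quadF, inner, matvec.
  apply C1ex_plus. apply C1ex_mult. apply C1ex_const.
  apply (C1ex_rsum d (fun i t => U i t * rsum d (fun j => A i j * U j t))).
  intros i Hi. apply C1ex_mult; auto.
  apply (C1ex_rsum d (fun j t => A i j * U j t)). intros j Hj. apply C1ex_mult; auto. apply C1ex_const.
  apply (C1ex_rsum d (fun i t => U i t * B i)). intros i Hi. apply C1ex_mult; auto. apply C1ex_const.
Qed.

Lemma Cont_quadF d A B (U : nat -> R -> R) : (forall i, (i<d)%nat -> Cont (U i)) ->
  Cont (fun t => quadF d A B (fun i => U i t)).
Proof. intros H. unfold quadF, inner, matvec. intros t.
  apply continuity_pt_plus. apply continuity_pt_mult. apply Cont_const.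
  apply (Cont_rsum d (fun i t => U i t * rsum d (fun j => A i j * U j t))).
  intros i Hi s. apply continuity_pt_mult. apply (H i Hi).
  apply (Cont_rsum d (fun j t => A i j * U j t)). intros j Hj u. apply continuity_pt_mult. apply Cont_const. apply (H j Hj).
  apply (Cont_rsum d (fun i t => U i t * B i)). intros i Hi s. apply continuity_pt_mult. apply (H i Hi). apply Cont_const.
Qed.


Lemma cont_bounded f a b : Cont f -> exists M, 0 <= M /\ forall t, a <= t <= b -> Rabs (f t) <= M.
Proof.
  intros Hf. destruct (Rle_dec a b) as [Hab|Hab].
  - destruct (continuity_ab_maj f a b Hab (fun c _ => Hf c)) as [Mx [HM _]].
    destruct (continuity_ab_maj (fun t => - f t) a b Hab (fun c _ => continuity_pt_opp _ _ (Hf c))) as [mn [Hm _]].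
    exists (Rabs (f Mx) + Rabs (f mn)). split. pose proof (Rabs_pos (f Mx)); pose proof (Rabs_pos (f mn)); lra.
    intros t Ht. specialize (HM t Ht). specialize (Hm t Ht).
    unfold Rabs; repeat destruct Rcase_abs; lra.
  - exists 0. split. lra. intros t Ht; lra.
Qed.

Lemma exR f a b : Cont f -> ex_RInt f a b.
Proof. intros H. apply (ex_RInt_continuous (V:=R_CompleteNormedModule)). intros; apply Cont_continuous; auto. Qed.

Lemma Cont_abs f : Cont f -> Cont (fun t => Rabs (f t)).
Proof. intros H t. apply continuity_pt_filterlim. apply continuous_Rabs_comp.
  apply Cont_continuous; auto. Qed.

Lemma Cont_mult f g : Cont f -> Cont g -> Cont (fun t => f t * g t).
Proof. intros H1 H2 t. apply continuity_pt_mult; auto. Qed.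
Lemma Cont_minus f g : Cont f -> Cont g -> Cont (fun t => f t - g t).
Proof. intros H1 H2 t. apply continuity_pt_minus; auto. Qed.
Lemma Cont_plus f g : Cont f -> Cont g -> Cont (fun t => f t + g t).
Proof. intros H1 H2 t. apply continuity_pt_plus; auto. Qed.

Lemma Cont_shift K tau : Cont K -> Cont (fun s => K (tau - s)).
Proof. intros H s. 
  assert (H1 : continuity_pt (fun s => tau - s) s).
  { apply continuity_pt_minus. apply continuity_pt_const; intros ? ?; auto. apply derivable_continuous_pt, derivable_pt_id. }
  exact (continuity_pt_comp (fun s => tau - s) K s H1 (H _)).
Qed.

Lemma Cont_integrand K w tau : Cont K -> Cont w -> Cont (fun s => w s * K (tau - s)).
Proof. intros. apply Cont_mult; auto. apply Cont_shift; auto. Qed.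

Definition Pk (K w : R -> R) (tau : R) := RInt (fun s => w s * K (tau - s)) 0 tau.

Lemma RInt_abs_bound f a b M : Cont f -> (forall t, Rmin a b <= t <= Rmax a b -> Rabs (f t) <= M) ->
  Rabs (RInt f a b) <= M * Rabs (b - a).
Proof.
  intros Hf HM. destruct (Rle_dec a b) as [Hab|Hab].
  - rewrite Rmin_left, Rmax_right in HM by lra.
    rewrite (Rabs_right (b - a)) by lra. rewrite Rmult_comm.
    apply abs_RInt_le_const; auto. apply exR; auto.
  - rewrite Rmin_right, Rmax_left in HM by lra.
    rewrite <- opp_RInt_swap by (apply exR; auto).
    change (Rabs (- RInt f b a) <= M * Rabs (b - a)). rewrite Rabs_Ropp.
    rewrite (Rabs_left (b - a)) by lra. replace (- (b - a)) with (a - b) by ring.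
    rewrite Rmult_comm. apply abs_RInt_le_const; auto. lra. apply exR; auto.
Qed.

Lemma Pk_bound K w L B y : 0 <= y -> Cont K -> Cont w ->
  (forall s, 0 <= s <= y -> Rabs (K s) <= L) ->
  (forall s, 0 <= s <= y -> Rabs (w s) <= B * exp (2 * L * s)) ->
  Rabs (Pk K w y) <= B * exp (2 * L * y) / 2.
Proof.
  intros Hy HK Hw HKL HwB.
  assert (HB : 0 <= B).
  { specialize (HwB 0 ltac:(lra)). rewrite Rmult_0_r, exp_0, Rmult_1_r in HwB.
    pose proof (Rabs_pos (w 0)); lra. }
  assert (HL : 0 <= L). { specialize (HKL 0 ltac:(lra)). pose proof (Rabs_pos (K 0)); lra. }
  unfold Pk. eapply Rle_trans. apply abs_RInt_le; auto. apply exR, Cont_integrand; auto.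
  assert (Hint : RInt (fun s => B * L * exp (2 * L * s)) 0 y = B * exp (2*L*y) / 2 - B * exp (2*L*0)/2).
  { apply is_RInt_unique.
    apply (is_RInt_derive (V:=R_CompleteNormedModule) (fun s => B * exp (2*L*s) / 2) (fun s => B * L * exp (2*L*s))).
    - intros x _. auto_derive; auto. field.
    - intros x _. 
      apply (ex_derive_continuous (K:=R_AbsRing) (V:=R_NormedModule)). auto_derive; auto. }
  eapply Rle_trans. apply RInt_le with (g := fun s => B * L * exp (2 * L * s)); auto.
  apply exR. apply Cont_abs, Cont_integrand; auto.
  apply exR. intros t. apply continuity_pt_filterlim.
      apply (ex_derive_continuous (K:=R_AbsRing) (V:=R_NormedModule) (fun s => B * L * exp (2*L*s))). auto_derive; auto.
  intros s Hs. rewrite Rabs_mult. 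
  assert (H1 := HwB s ltac:(lra)). assert (H2 := HKL (y - s) ltac:(lra)).
  replace (B * L * exp (2 * L * s)) with ((B * exp (2 * L * s)) * L) by ring.
  apply Rmult_le_compat; auto using Rabs_pos.
  rewrite Hint. rewrite Rmult_0_r, exp_0. lra.
Qed.

Lemma Pk_minus K w1 w2 t : Cont K -> Cont w1 -> Cont w2 ->
  Pk K w1 t - Pk K w2 t = Pk K (fun s => w1 s - w2 s) t.
Proof.
  intros HK H1 H2. unfold Pk.
  rewrite <- (RInt_minus (V:=R_CompleteNormedModule)) by (apply exR, Cont_integrand; auto).
  apply RInt_ext. intros x _. unfold minus, plus, opp; simpl. ring.
Qed.

Lemma Pk_cont K w : Cont K -> Cont w -> Cont (Pk K w).
Proof.
  intros HK Hw x. apply continuity_pt_locally. intros eps.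
  set (R0 := Rabs x + 1).
  assert (HR0 : 0 < R0) by (unfold R0; pose proof (Rabs_pos x); lra).
  destruct (cont_bounded w (-R0) R0 Hw) as [Mw [HMw0 HMw]].
  destruct (cont_bounded K (-(2*R0)) (2*R0) HK) as [MK [HMK0 HMK]].
  assert (Heta : 0 < eps / (2 * (R0 * Mw + 1))).
  { apply Rdiv_lt_0_compat. apply cond_pos. assert (0 <= R0 * Mw) by (apply Rmult_le_pos; lra). lra. }
  destruct (Heine_cor2 (f:=K) (a:= -(2*R0)) (b:=2*R0) (fun x _ => HK x) (mkposreal _ Heta)) as [del Hdel].
  simpl in Hdel.
  assert (Hd2 : 0 < eps / (2 * (Mw * MK + 1))).
  { apply Rdiv_lt_0_compat. apply cond_pos. assert (0 <= Mw * MK) by (apply Rmult_le_pos; lra). lra. }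
  assert (Hpos : 0 < Rmin 1 (Rmin del (eps / (2 * (Mw * MK + 1))))).
  { repeat apply Rmin_pos; try lra; apply cond_pos. }
  exists (mkposreal _ Hpos). intros x' Hx'. simpl in Hx'. unfold ball in Hx'; simpl in Hx'.
  unfold AbsRing_ball, abs, minus, plus, opp in Hx'; simpl in Hx'.
  assert (Hx1 : Rabs (x' - x) < 1) by (eapply Rlt_le_trans; [exact Hx'|apply Rmin_l]).
  assert (Hx2 : Rabs (x' - x) < del) by (eapply Rlt_le_trans; [exact Hx'|eapply Rle_trans; [apply Rmin_r| apply Rmin_l]]).
  assert (Hx3 : Rabs (x' - x) < eps / (2 * (Mw * MK + 1))) by (eapply Rlt_le_trans; [exact Hx'|eapply Rle_trans; [apply Rmin_r| apply Rmin_r]]).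
  assert (Hxa : Rabs x <= R0 - 1) by (unfold R0; lra).
  assert (Hxa' : Rabs x' <= R0).
  { unfold Rabs in *; repeat destruct Rcase_abs; lra. }
  unfold Pk.
  assert (Hch : RInt (fun s => w s * K (x' - s)) 0 x' = RInt (fun s => w s * K (x' - s)) 0 x + RInt (fun s => w s * K (x' - s)) x x').
  { symmetry. apply (RInt_Chasles (V:=R_CompleteNormedModule)); apply exR, Cont_integrand; auto. }
  rewrite Hch.
  assert (Hm : RInt (fun s => w s * K (x' - s)) 0 x - RInt (fun s => w s * K (x - s)) 0 x =
               RInt (fun s => w s * (K (x' - s) - K (x - s))) 0 x).
  { rewrite <- (RInt_minus (V:=R_CompleteNormedModule)) by (apply exR, Cont_integrand; auto).
    apply RInt_ext. intros ? _. unfold minus, plus, opp; simpl. ring. }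
  replace (RInt (fun s => w s * K (x' - s)) 0 x + RInt (fun s => w s * K (x' - s)) x x' -
      RInt (fun s => w s * K (x - s)) 0 x) with
   ((RInt (fun s => w s * K (x' - s)) 0 x - RInt (fun s => w s * K (x - s)) 0 x) + RInt (fun s => w s * K (x' - s)) x x') by ring.
  rewrite Hm.
  eapply Rle_lt_trans. apply Rabs_triang.
  assert (HA : Rabs (RInt (fun s => w s * (K (x' - s) - K (x - s))) 0 x) <= (Mw * (eps / (2 * (R0 * Mw + 1)))) * Rabs (x - 0)).
  { apply RInt_abs_bound. apply Cont_mult; auto. apply Cont_minus; apply Cont_shift; auto.
    intros t Ht. rewrite Rabs_mult. apply Rmult_le_compat; auto using Rabs_pos.
    apply HMw. unfold Rmin, Rmax in Ht; destruct Rle_dec in Ht; unfold Rabs in *; repeat destruct Rcase_abs; lra.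
    apply Rlt_le. apply Hdel.
    unfold Rmin, Rmax in Ht; destruct Rle_dec in Ht; unfold Rabs in *; repeat destruct Rcase_abs; lra.
    unfold Rmin, Rmax in Ht; destruct Rle_dec in Ht; unfold Rabs in *; repeat destruct Rcase_abs; lra.
    replace (x' - t - (x - t)) with (x' - x) by ring. auto. }
  assert (HB : Rabs (RInt (fun s => w s * K (x' - s)) x x') <= (Mw * MK) * Rabs (x' - x)).
  { apply RInt_abs_bound. apply Cont_integrand; auto.
    intros t Ht. rewrite Rabs_mult. apply Rmult_le_compat; auto using Rabs_pos.
    apply HMw. unfold Rmin, Rmax in Ht; destruct Rle_dec in Ht; unfold Rabs in *; repeat destruct Rcase_abs; lra.
    apply HMK. unfold Rmin, Rmax in Ht; destruct Rle_dec in Ht; unfold Rabs in *; repeat destruct Rcase_abs; lra. }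
  rewrite Rminus_0_r in HA.
  assert (HA2 : Mw * (eps / (2 * (R0 * Mw + 1))) * Rabs x <= eps / 2).
  { assert (H0 : 0 <= R0 * Mw) by (apply Rmult_le_pos; lra).
    apply Rle_trans with (Mw * R0 * (eps / (2 * (R0 * Mw + 1)))).
    replace (Mw * (eps / (2 * (R0 * Mw + 1))) * Rabs x) with (Mw * Rabs x * (eps / (2 * (R0 * Mw + 1)))) by ring.
    apply Rmult_le_compat_r. lra. apply Rmult_le_compat_l; lra.
    replace (Mw * R0 * (eps / (2 * (R0 * Mw + 1)))) with ((eps/2) * ((R0 * Mw) / (R0 * Mw + 1))) by (field; lra).
    pose proof (cond_pos eps).
    assert (R0 * Mw / (R0 * Mw + 1) <= 1). { apply Rmult_le_reg_r with (R0 * Mw + 1). lra. unfold Rdiv. rewrite Rmult_assoc, Rinv_l by lra. lra. }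
    assert (0 <= eps / 2) by lra.
    replace (eps / 2) with (eps/2 * 1) at 2 by ring. apply Rmult_le_compat_l; lra. }
  assert (HB2 : Mw * MK * Rabs (x' - x) < eps / 2 \/ Mw * MK * Rabs (x' - x) <= eps / 2).
  { right. assert (H0 : 0 <= Mw * MK) by (apply Rmult_le_pos; lra).
    apply Rle_trans with (Mw * MK * (eps / (2 * (Mw * MK + 1)))).
    apply Rmult_le_compat_l; lra.
    replace (Mw * MK * (eps / (2 * (Mw * MK + 1)))) with ((eps/2) * ((Mw * MK) / (Mw * MK + 1))) by (field; lra).
    pose proof (cond_pos eps).
    assert (Mw * MK / (Mw * MK + 1) < 1). { apply Rmult_lt_reg_r with (Mw * MK + 1). lra. unfold Rdiv. rewrite Rmult_assoc, Rinv_l by lra. lra. }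
    assert (0 <= eps / 2) by lra.
    replace (eps / 2) with (eps/2 * 1) at 2 by ring. apply Rmult_le_compat_l; lra. }
  destruct HB2 as [HB2|HB2].
  - lra.
  - (* need strictness: use strict from HA side *)
    assert (HA3 : Mw * (eps / (2 * (R0 * Mw + 1))) * Rabs x < eps / 2).
    { assert (H0 : 0 <= R0 * Mw) by (apply Rmult_le_pos; lra).
      apply Rle_lt_trans with (Mw * (R0 - 1) * (eps / (2 * (R0 * Mw + 1)))).
      replace (Mw * (eps / (2 * (R0 * Mw + 1))) * Rabs x) with (Mw * Rabs x * (eps / (2 * (R0 * Mw + 1)))) by ring.
      apply Rmult_le_compat_r. lra. apply Rmult_le_compat_l; lra.
      replace (Mw * (R0 - 1) * (eps / (2 * (R0 * Mw + 1)))) with ((eps/2) * ((R0 * Mw - Mw) / (R0 * Mw + 1))) by (field; lra).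
      pose proof (cond_pos eps).
      assert ((R0 * Mw - Mw) / (R0 * Mw + 1) < 1). { apply Rmult_lt_reg_r with (R0 * Mw + 1). lra. unfold Rdiv. rewrite Rmult_assoc, Rinv_l by lra. lra. }
      assert (0 < eps / 2) by lra.
      replace (eps / 2) with (eps/2 * 1) at 2 by ring. apply Rmult_lt_compat_l; lra. }
    lra.
Qed.


Lemma exp_mono x y : x <= y -> exp x <= exp y.
Proof. intros H. destruct (Req_dec x y). subst; lra. apply Rlt_le, exp_increasing; lra. Qed.

Lemma exp_ge1 x : 0 <= x -> 1 <= exp x.
Proof. intros. rewrite <- exp_0. apply exp_mono; auto. Qed.

Lemma half_pow_pos n : 0 < (/2)^n.
Proof. apply pow_lt; lra. Qed.

Lemma small_geom_ex C eps : 0 < eps -> exists N, forall n, (n >= N)%nat -> C * (/2)^n < eps.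
Proof.
  intros He. assert (Hy : 0 < eps / (Rabs C + 1)) by (apply Rdiv_lt_0_compat; [lra| pose proof (Rabs_pos C); lra]).
  assert (Hh : Rabs (/2) < 1) by (rewrite Rabs_right; lra).
  destruct (pow_lt_1_zero _ Hh _ Hy) as [N HN]. exists N. intros n Hn.
  specialize (HN n Hn). rewrite Rabs_right in HN by (apply Rle_ge, Rlt_le, half_pow_pos).
  apply Rle_lt_trans with (Rabs C * (/2)^n).
  apply Rmult_le_compat_r. apply Rlt_le, half_pow_pos. apply Rle_abs.
  apply Rle_lt_trans with (Rabs C * (eps / (Rabs C + 1))).
  apply Rmult_le_compat_l. apply Rabs_pos. lra.
  replace (Rabs C * (eps / (Rabs C + 1))) with (eps * (Rabs C / (Rabs C + 1))) by (field; pose proof (Rabs_pos C); lra).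
  assert (Rabs C / (Rabs C + 1) < 1).
  { pose proof (Rabs_pos C). apply Rmult_lt_reg_r with (Rabs C + 1). lra. unfold Rdiv. rewrite Rmult_assoc, Rinv_l by lra. lra. }
  replace eps with (eps * 1) at 2 by ring. apply Rmult_lt_compat_l; lra.
Qed.

Lemma small_geom C x : (forall n, Rabs x <= C * (/2)^n) -> x = 0.
Proof.
  intros H. destruct (Req_dec x 0) as [|Hx]; auto. exfalso.
  assert (Hp : 0 < Rabs x) by (apply Rabs_pos_lt; auto).
  destruct (small_geom_ex C (Rabs x) Hp) as [N HN].
  specialize (HN N (le_n _)). specialize (H N). lra.
Qed.

Lemma volt_uniq K dl : Cont K -> Cont dl -> (forall t, 0 <= t -> dl t = - Pk K dl t) ->
  forall t, 0 <= t -> dl t = 0.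
Proof.
  intros HK Hd Heq tau Htau.
  destruct (cont_bounded dl 0 tau Hd) as [B [HB0 HB]].
  destruct (cont_bounded K 0 tau HK) as [L [HL0 HL]].
  assert (Hc : forall n y, 0 <= y <= tau -> Rabs (dl y) <= (B * (/2)^n) * exp (2 * L * y)).
  { induction n; intros y Hy.
    - simpl. rewrite Rmult_1_r. eapply Rle_trans. apply HB; auto.
      pose proof (exp_ge1 (2 * L * y) ltac:(apply Rmult_le_pos; [apply Rmult_le_pos|]; lra)).
      replace B with (B * 1) at 1 by ring. apply Rmult_le_compat_l; lra.
    - rewrite Heq by lra. rewrite Rabs_Ropp.
      eapply Rle_trans. apply Pk_bound with (L := L) (B := B * (/2)^n); auto. lra.
      intros s Hs. apply HL; lra.
      intros s Hs. apply IHn. lra.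
      simpl. lra. }
  apply (small_geom (B * exp (2 * L * tau))). intros n.
  specialize (Hc n tau ltac:(lra)). lra.
Qed.

Fixpoint Sq (K f : R -> R) (n : nat) : R -> R :=
  match n with O => f | S m => fun t => f t - Pk K (Sq K f m) t end.

Lemma Sq_cont K f n : Cont K -> Cont f -> Cont (Sq K f n).
Proof. intros HK Hf. induction n; simpl; auto. apply Cont_minus; auto. apply Pk_cont; auto. Qed.

Lemma Sq_cauchy K f Rw : Cont K -> Cont f -> 0 <= Rw -> exists E, 0 <= E /\
  forall n k y, 0 <= y <= Rw -> Rabs (Sq K f (n + k) y - Sq K f n y) <= E * ((/2)^n - (/2)^(n+k)).
Proof.
  intros HK Hf HRw.
  destruct (cont_bounded f 0 Rw Hf) as [A [HA0 HA]].
  destruct (cont_bounded K 0 Rw HK) as [L [HL0 HL]].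
  assert (Hd : forall n y, 0 <= y <= Rw -> Rabs (Sq K f (S n) y - Sq K f n y) <= (A * (/2)^(S n)) * exp (2 * L * y)).
  { induction n; intros y Hy.
    - simpl. replace (f y - Pk K f y - f y) with (- Pk K f y) by ring. rewrite Rabs_Ropp.
      eapply Rle_trans. apply Pk_bound with (L := L) (B := A); auto. lra.
      intros s Hs; apply HL; lra.
      intros s Hs. eapply Rle_trans. apply HA; lra.
      pose proof (exp_ge1 (2 * L * s) ltac:(apply Rmult_le_pos; [apply Rmult_le_pos|]; lra)).
      replace A with (A * 1) at 1 by ring. apply Rmult_le_compat_l; lra.
      lra.
    - change (Rabs ((f y - Pk K (Sq K f (S n)) y) - (f y - Pk K (Sq K f n) y)) <= A * (/ 2) ^ S (S n) * exp (2 * L * y)).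
      replace ((f y - Pk K (Sq K f (S n)) y) - (f y - Pk K (Sq K f n) y)) with
        (- (Pk K (Sq K f (S n)) y - Pk K (Sq K f n) y)) by ring.
      rewrite Rabs_Ropp. rewrite Pk_minus by (auto; apply Sq_cont; auto).
      eapply Rle_trans. apply Pk_bound with (L := L) (B := A * (/2)^(S n)); auto. lra.
      apply Cont_minus; apply Sq_cont; auto.
      intros s Hs; apply HL; lra.
      intros s Hs. apply IHn. lra.
      change ((/2)^(S (S n))) with (/2 * (/2)^(S n)). lra. }
  exists (A * exp (2 * L * Rw)). split.
  { apply Rmult_le_pos; auto. apply Rlt_le, exp_pos. }
  intros n k y Hy. induction k.
  - rewrite Nat.add_0_r, Rminus_diag, Rabs_R0, Rminus_diag, Rmult_0_r. lra.
  - replace (n + S k)%nat with (S (n + k)) by lia.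
    replace (Sq K f (S (n + k)) y - Sq K f n y) with
      ((Sq K f (S (n + k)) y - Sq K f (n+k) y) + (Sq K f (n+k) y - Sq K f n y)) by ring.
    eapply Rle_trans. apply Rabs_triang.
    assert (H1 := Hd (n+k)%nat y Hy).
    assert (H2 : A * (/ 2) ^ S (n + k) * exp (2 * L * y) <= A * exp (2 * L * Rw) * (/2)^(S (n+k))).
    { replace (A * (/ 2) ^ S (n + k) * exp (2 * L * y)) with (A * exp (2 * L * y) * (/2)^(S (n+k))) by ring.
      apply Rmult_le_compat_r. apply Rlt_le, half_pow_pos. apply Rmult_le_compat_l; auto.
      apply exp_mono. apply Rmult_le_compat_l; lra. }
    change ((/2)^(S (n+k))) with (/2 * (/2)^(n+k)) in *. nra.
Qed.

Definition u0 K f (y : R) : R := real (Lim_seq (fun n => Sq K f n y)).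

Lemma u0_bound K f Rw : Cont K -> Cont f -> 0 <= Rw -> exists E, 0 <= E /\
  forall n y, 0 <= y <= Rw -> Rabs (Sq K f n y - u0 K f y) <= E * (/2)^n.
Proof.
  intros HK Hf HRw. destruct (Sq_cauchy K f Rw HK Hf HRw) as [E [HE0 HE]].
  exists E. split; auto. intros n y Hy.
  assert (Hc : ex_finite_lim_seq (fun n => Sq K f n y)).
  { apply ex_lim_seq_cauchy_corr. intros eps.
    destruct (small_geom_ex E eps (cond_pos eps)) as [N HN]. exists N. intros p q Hp Hq.
    destruct (Compare_dec.le_lt_dec p q).
    - replace q with (p + (q - p))%nat by lia. rewrite Rabs_minus_sym.
      eapply Rle_lt_trans. apply HE; auto.
      assert (0 < (/2)^(p + (q-p))) by apply half_pow_pos. specialize (HN p Hp). nra.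
    - replace p with (q + (p - q))%nat by lia.
      eapply Rle_lt_trans. apply HE; auto.
      assert (0 < (/2)^(q + (p-q))) by apply half_pow_pos. specialize (HN q Hq). nra. }
  apply Lim_seq_correct' in Hc. fold (u0 K f y) in Hc.
  apply (is_lim_seq_incr_n _ n) in Hc.
  assert (Hl := is_lim_seq_abs _ _ (is_lim_seq_minus' _ _ _ _ Hc (is_lim_seq_const (Sq K f n y)))).
  assert (Hk : forall k, Rabs (Sq K f (k + n) y - Sq K f n y) <= E * (/2)^n).
  { intros k. rewrite Nat.add_comm. eapply Rle_trans. apply HE; auto.
    assert (0 < (/2)^(n + k)) by apply half_pow_pos. nra. }
  assert (Hle := is_lim_seq_le _ _ _ _ Hk Hl (is_lim_seq_const (E * (/2)^n))).
  simpl in Hle. rewrite Rabs_minus_sym. apply Hle.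
Qed.

Lemma u0_cont K f : Cont K -> Cont f -> cont_Rplus (u0 K f).
Proof.
  intros HK Hf t Ht eps He.
  destruct (u0_bound K f (t + 1) HK Hf ltac:(lra)) as [E [HE0 HE]].
  destruct (small_geom_ex E (eps/3) ltac:(lra)) as [N HN]. specialize (HN N (le_n _)).
  destruct (Sq_cont K f N HK Hf t (eps/3) ltac:(lra)) as [del [Hd Hdel]].
  exists (Rmin 1 del). split. apply Rmin_pos; lra.
  intros s Hs Hst.
  assert (Hs1 : Rabs (s - t) < 1) by (eapply Rlt_le_trans; [exact Hst| apply Rmin_l]).
  assert (Hs2 : Rabs (s - t) < del) by (eapply Rlt_le_trans; [exact Hst| apply Rmin_r]).
  assert (Hsr : s <= t + 1) by (unfold Rabs in Hs1; destruct Rcase_abs in Hs1; lra).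
  assert (H1 := HE N s ltac:(lra)). assert (H2 := HE N t ltac:(lra)).
  assert (H3 : Rabs (Sq K f N s - Sq K f N t) < eps / 3).
  { destruct (Req_dec s t). subst. rewrite Rminus_diag, Rabs_R0. lra.
    apply (Hdel s). split. split; [exact I|auto]. exact Hs2. }
  replace (u0 K f s - u0 K f t) with (-(Sq K f N s - u0 K f s) + (Sq K f N s - Sq K f N t) + (Sq K f N t - u0 K f t)) by ring.
  eapply Rle_lt_trans. apply Rabs_triang. eapply Rle_lt_trans. apply Rplus_le_compat_r. apply Rabs_triang.
  rewrite Rabs_Ropp. lra.
Qed.

Lemma volt_exists K f : Cont K -> Cont f ->
  exists th, Cont th /\ forall t, 0 <= t -> th t = f t - Pk K th t.
Proof.
  intros HK Hf. set (th := fun y => u0 K f (Rmax 0 y)).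
  assert (Hth : Cont th) by (apply cont_Rplus_max, u0_cont; auto).
  exists th. split; auto. intros tau Htau.
  destruct (u0_bound K f tau HK Hf Htau) as [E [HE0 HE]].
  destruct (cont_bounded K 0 tau HK) as [L [HL0 HL]].
  apply Rminus_diag_uniq.
  apply (small_geom (E + E * exp (2 * L * tau))). intros n.
  assert (Hth_eq : forall s, 0 <= s -> th s = u0 K f s) by (intros; unfold th; rewrite Rmax_right; auto).
  assert (H1 := HE (S n) tau ltac:(lra)).
  assert (H2 : Rabs (Pk K (fun s => Sq K f n s - th s) tau) <= (E * (/2)^n) * exp (2 * L * tau) / 2).
  { apply Pk_bound. lra. auto. apply Cont_minus; auto. apply Sq_cont; auto.
    intros s Hs; apply HL; lra.
    intros s Hs. rewrite Hth_eq by lra. eapply Rle_trans. apply HE; lra.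
    pose proof (exp_ge1 (2 * L * s) ltac:(apply Rmult_le_pos; [apply Rmult_le_pos|]; lra)).
    pose proof (half_pow_pos n).
    replace (E * (/2)^n) with (E * (/2)^n * 1) at 1 by ring. apply Rmult_le_compat_l; try lra. nra. }
  rewrite <- Pk_minus in H2 by (auto; apply Sq_cont; auto).
  simpl in H1. rewrite Hth_eq by lra.
  replace (u0 K f tau - (f tau - Pk K th tau)) with
    (- (f tau - Pk K (Sq K f n) tau - u0 K f tau) - (Pk K (Sq K f n) tau - Pk K th tau)) by ring.
  eapply Rle_trans. apply Rabs_triang. rewrite Rabs_Ropp, Rabs_Ropp.
  pose proof (half_pow_pos n). pose proof (exp_pos (2 * L * tau)).
  assert (E * (/ 2 * (/ 2) ^ n) <= E * (/2)^n) by nra.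
  nra.
Qed.


Lemma deriv_zero_right F x l : is_derive F x l -> (forall s, x <= s -> F s = 0) -> l = 0.
Proof.
  intros H Hz. apply is_derive_Reals in H.
  destruct (Req_dec l 0) as [|Hl]; auto. exfalso.
  destruct (H (Rabs l) (Rabs_pos_lt _ Hl)) as [del Hd].
  assert (Hp := cond_pos del).
  specialize (Hd (del/2) ltac:(lra) ltac:(rewrite Rabs_right; lra)).
  rewrite !Hz in Hd by lra.
  replace ((0 - 0) / (del / 2) - l) with (- l) in Hd by (field; lra).
  rewrite Rabs_Ropp in Hd. lra.
Qed.

Lemma derive_integrand th k k' : CD1 k k' -> forall t u,
  is_derive (fun z => th t * k (z - t)) u (th t * k' (u - t)).
Proof.
  intros [Hk _] t u. apply is_derive_Reals.
  assert (H1 : derivable_pt_lim (fun z => z - t) u 1).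
  { replace 1 with (1 - 0) by ring.
    exact (derivable_pt_lim_minus id (fct_cte t) u 1 0 (derivable_pt_lim_id u) (derivable_pt_lim_const t u)). }
  assert (H2 := derivable_pt_lim_comp (fun z => z - t) k u 1 (k' (u - t)) H1 (proj1 (is_derive_Reals _ _ _) (Hk (u - t)))).
  assert (H3 := derivable_pt_lim_scal _ (th t) u _ H2).
  replace (th t * k' (u - t)) with (th t * (k' (u - t) * 1)) by ring. exact H3.
Qed.

Lemma leibniz th k k' : Cont th -> CD1 k k' -> forall x,
  is_derive (fun tau => RInt (fun s => th s * k (tau - s)) 0 tau) x
    (th x * k 0 + RInt (fun s => th s * k' (x - s)) 0 x).
Proof.
  intros Hth Hk x.
  assert (HkC : Cont k) by (eapply CD1_Cont; eauto).
  assert (Hk'C : Cont k') by (destruct Hk; auto).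
  pose (f := fun tau s => th s * k (tau - s)).
  assert (HD : forall u t, Derive (fun z => f z t) u = th t * k' (u - t)).
  { intros. apply is_derive_unique. apply derive_integrand; auto. }
  assert (Hc2 : forall u v, continuity_2d_pt (fun u v => Derive (fun z => f z v) u) u v).
  { intros u v. apply continuity_2d_pt_ext with (f := fun u v => th v * k' (u - v)).
    intros; rewrite HD; auto.
    apply continuity_2d_pt_mult.
    apply (continuity_1d_2d_pt_comp th (fun u v => v)). apply Hth. apply continuity_2d_pt_id2.
    apply (continuity_1d_2d_pt_comp k' (fun u v => u - v)). apply Hk'C.
    apply continuity_2d_pt_minus. apply continuity_2d_pt_id1. apply continuity_2d_pt_id2. }
  assert (Hres := is_derive_RInt_param_bound_comp f (fun _ => 0) (fun y => y) x 0 1).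
  unfold f in Hres. simpl in Hres.
  replace (th x * k 0 + RInt (fun s => th s * k' (x - s)) 0 x) with
    (RInt (fun t => Derive (fun u => th t * k (u - t)) x) 0 x + - (th 0 * k (x - 0)) * 0 + th x * k (x - x) * 1).
  apply Hres.
  - apply filter_forall. intros; apply exR, Cont_integrand; auto.
  - exists (mkposreal 1 Rlt_0_1). apply filter_forall. intros; apply exR, Cont_integrand; auto.
  - exists (mkposreal 1 Rlt_0_1). apply filter_forall. intros; apply exR, Cont_integrand; auto.
  - apply is_derive_Reals, derivable_pt_lim_const.
  - apply is_derive_Reals, derivable_pt_lim_id.
  - exists (mkposreal 1 Rlt_0_1). apply filter_forall. intros y t0 _. eexists. apply (derive_integrand th k k' Hk).
  - intros t _. apply (Hc2 x t).
  - exists (mkposreal 1 Rlt_0_1). intros; apply Hc2.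
  - exists (mkposreal 1 Rlt_0_1). intros; apply Hc2.
  - apply Cont_integrand; auto.
  - apply Cont_integrand; auto.
  - rewrite Rminus_diag. rewrite (RInt_ext _ (fun s => th s * k' (x - s))). ring.
    intros; apply HD.
Qed.


Lemma quadF_zero d A B u : (forall i, (i < d)%nat -> u i = 0) -> quadF d A B u = 0.
Proof. intros H. unfold quadF, inner.
  rewrite (rsum_zero d (fun i => u i * matvec d A u i)) by (intros; rewrite H; auto; ring).
  rewrite (rsum_zero d (fun i => u i * B i)) by (intros; rewrite H; auto; ring). ring. Qed.

Lemma Pk_scal k' th c t : Cont k' -> Cont th ->
  Pk (fun t => k' t * / c) th t = / c * RInt (fun s => th s * k' (t - s)) 0 t.
Proof. intros Hk Hth. unfold Pk.
  rewrite <- (RInt_scal (V:=R_CompleteNormedModule)) by (apply exR, Cont_integrand; auto).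
  apply RInt_ext; intros. change (th x * (k' (t - x) * / c) = / c * (th x * k' (t - x))). ring. Qed.

Lemma is_derive_val (f : R -> R) x l l' : is_derive f x l -> l = l' -> is_derive f x l'.
Proof. intros H E; subst; auto. Qed.

Lemma G_second th kt k' c g' gt : Cont th -> CD1 kt k' -> CD1 gt g' -> kt 0 = c -> c <> 0 -> gt 0 = 0 ->
  (forall t, 0 <= t -> th t = g' t * / c - Pk (fun t => k' t * / c) th t) ->
  forall tau, 0 <= tau -> RInt (fun s => th s * kt (tau - s)) 0 tau = gt tau.
Proof.
  intros Hth Hk Hg Hc Hc0 Hg0 Heq tau Htau.
  assert (Hk'C : Cont k') by (destruct Hk; auto).
  set (F := fun t => RInt (fun s => th s * kt (t - s)) 0 t - gt t).
  assert (HF : forall t, 0 <= t -> is_derive F t 0).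
  { intros t Ht. unfold F.
    apply is_derive_val with ((th t * kt 0 + RInt (fun s => th s * k' (t - s)) 0 t) - g' t).
    apply is_derive_Reals. apply (derivable_pt_lim_minus (fun t => RInt (fun s => th s * kt (t - s)) 0 t) gt).
    apply is_derive_Reals. apply leibniz; auto.
    apply is_derive_Reals. destruct Hg as [Hg _]. apply Hg.
    specialize (Heq t Ht). rewrite Pk_scal in Heq by auto. rewrite Hc. rewrite Heq. match goal with |- ?a = ?b => change (@eq R a b) end. field. auto. }
  destruct (Req_dec tau 0) as [Ht0|Ht0].
  - subst. rewrite RInt_point, Hg0. reflexivity.
  - assert (He := eq_is_derive (V:=R_NormedModule) F 0 tau (fun t Ht => HF t (proj1 Ht)) ltac:(lra)).
    unfold F in He. rewrite RInt_point, Hg0 in He. change (0 - 0 = RInt (fun s => th s * kt (tau - s)) 0 tau - gt tau) in He. lra.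
Qed.

Theorem mainTheorem6
  (d : nat) (hd : (1 <= d)%nat) (pos : nat -> Prop)
  (a : mat) (b : vec) (alpha : nat -> mat) (beta : nat -> vec)
  (ha : sym_psd d a) (halpha : forall i, (i < d)%nat -> sym_psd d (alpha i))
  (l : R) (lam : vec) (hlam : lam O <> 0)
  (Phi : R -> R) (Psi : R -> vec) (dPhi : R -> R) (dPsi : R -> vec)
  (hric : riccati_global_solution d a b alpha beta lam Phi Psi dPhi dPsi)
  (h : R -> R) (x : vec) (hh : C1_Rplus h) (hx : in_X d pos x)
  (h0 : h 0 = l + inner d lam x) :
  exists theta : R -> R,
    cont_Rplus theta /\ solves_H d l dPhi dPsi h x theta /\
    (forall theta' : R -> R, cont_Rplus theta' -> solves_H d l dPhi dPsi h x theta' ->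
       forall t, 0 <= t -> theta' t = theta t).
Proof.
  destruct hric as [HdPhi [HdPsi [HPhi0 [HPsi0 [HeqPhi HeqPsi]]]]].
  destruct hh as [h' [Hh' Hh'c]].
  set (Pt := fun i t => ext (fun s => Psi s i) (fun s => dPsi s i) t).
  assert (HPt_eq : forall t, 0 <= t -> (fun i => Pt i t) = Psi t).
  { intros t Ht. apply functional_extensionality. intros i. unfold Pt. apply ext_eq; auto. }
  assert (HPt_der : forall i, (i < d)%nat -> forall t, is_derive (Pt i) t (dPsi (Rmax 0 t) i)).
  { intros i Hi t. apply (ext_derive (fun s => Psi s i) (fun s => dPsi s i)). apply HdPsi; auto. }
  assert (HPt_cont : forall i, (i<d)%nat -> Cont (Pt i)).
  { intros i Hi t. apply continuity_pt_filterlim.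
    apply (ex_derive_continuous (K:=R_AbsRing) (V:=R_NormedModule)). eexists; apply HPt_der; auto. }
  assert (HdPsi_c : forall i, (i<d)%nat -> cont_Rplus (fun t => dPsi t i)).
  { intros i Hi. apply cont_Rplus_of with (g := fun t => RicR d alpha beta (fun j => Pt j t) i - lam i).
    - apply Cont_minus. unfold RicR. apply (Cont_quadF d (alpha i) (beta i) Pt). auto. apply Cont_const.
    - intros t Ht. rewrite HPt_eq by auto. apply HeqPsi; auto. }
  assert (HPt_C1 : forall i, (i<d)%nat -> CD1ex (Pt i)).
  { intros i Hi. exists (fun t => dPsi (Rmax 0 t) i). split. apply HPt_der; auto.
    apply (cont_Rplus_max (fun t => dPsi t i)). auto. }
  set (kt := fun t => RicR d alpha beta (fun j => Pt j t) O - lam O).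
  assert (Hkt : CD1ex kt).
  { unfold kt, RicR. apply C1ex_minus. apply C1ex_quadF; auto. apply C1ex_const. }
  destruct Hkt as [k' Hk'].
  assert (Hk'C : Cont k') by (destruct Hk'; auto).
  assert (Hkt_eq : forall t, 0 <= t -> kt t = dPsi t O).
  { intros t Ht. unfold kt. rewrite HPt_eq by auto. symmetry. apply HeqPsi; auto; lia. }
  assert (Hc : kt 0 = - lam O).
  { unfold kt, RicR. rewrite quadF_zero. ring. intros i Hi. unfold Pt. rewrite ext_eq by lra. apply HPsi0; auto. }
  set (ht := ext h h').
  assert (Hht : CD1ex ht).
  { exists (fun t => h' (Rmax 0 t)). split. apply ext_derive; auto. apply cont_Rplus_max; auto. }
  set (gt := fun t => l - ht t - quadF d a b (fun j => Pt j t) - inner d (fun i => RicR d alpha beta (fun j => Pt j t) i - lam i) x).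
  assert (Hgt : CD1ex gt).
  { unfold gt. apply C1ex_minus. apply C1ex_minus. apply C1ex_minus. apply C1ex_const. auto. apply C1ex_quadF; auto.
    unfold inner. apply (C1ex_rsum d (fun i t => (RicR d alpha beta (fun j => Pt j t) i - lam i) * x i)).
    intros i Hi. apply C1ex_mult. apply C1ex_minus. unfold RicR. apply C1ex_quadF; auto. apply C1ex_const. apply C1ex_const. }
  destruct Hgt as [g' Hg'].
  assert (Hg'C : Cont g') by (destruct Hg'; auto).
  assert (Hgt_eq : forall t, 0 <= t -> gt t = l - h t - dPhi t - inner d (dPsi t) x).
  { intros t Ht. unfold gt, ht. rewrite ext_eq by auto. rewrite HPt_eq by auto. rewrite HeqPhi by auto.
    f_equal. unfold inner. apply rsum_ext. intros i Hi. rewrite HeqPsi; auto. }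
  assert (Hg0 : gt 0 = 0).
  { rewrite Hgt_eq by lra. rewrite h0. rewrite HeqPhi by lra. rewrite quadF_zero by (intros; apply HPsi0; auto).
    assert (Hi0 : inner d (dPsi 0) x = - inner d lam x).
    { unfold inner. rewrite <- rsum_opp. apply rsum_ext. intros i Hi. rewrite HeqPsi by (auto; lra).
      unfold RicR. rewrite quadF_zero by (intros; apply HPsi0; auto). ring. }
    rewrite Hi0. ring. }
  assert (Hc0 : kt 0 <> 0) by (rewrite Hc; intro; apply hlam; lra).
  set (c := kt 0) in *.
  assert (HK : Cont (fun t => k' t * / c)) by (apply Cont_mult; auto; apply Cont_const).
  destruct (volt_exists (fun t => k' t * / c) (fun t => g' t * / c) HK) as [th [Hth Hth_eq]].
  { apply Cont_mult; auto. apply Cont_const. }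
  assert (HG := G_second th kt k' c g' gt Hth Hk' Hg' eq_refl Hc0 Hg0 Hth_eq).
  assert (HktC : Cont kt) by (eapply CD1_Cont; eauto).
  exists th. split; [|split].
  - apply cont_Rplus_of with (g := th); auto.
  - intros tau Htau. exists (gt tau). split.
    + assert (Hex : ex_RInt (fun s => th s * dPsi (tau - s) O) 0 tau).
      { apply (ex_RInt_ext (V:=R_NormedModule) (fun s => th s * kt (tau - s))).
        intros s [Hs1 Hs2]. rewrite Rmin_left in Hs1 by lra. rewrite Rmax_right in Hs2 by lra.
        rewrite Hkt_eq by lra. auto.
        apply exR, Cont_integrand; auto. }
      exists (ex_RInt_Reals_0 _ _ _ Hex). rewrite <- RInt_Reals. rewrite <- (HG tau Htau).
      apply RInt_ext. intros s [Hs1 Hs2]. rewrite Rmin_left in Hs1 by lra. rewrite Rmax_right in Hs2 by lra.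
      rewrite Hkt_eq by lra. auto.
    + rewrite Hgt_eq by auto. ring.
  - intros th' Hth' Hsol t Ht.
    set (th2 := fun s => th' (Rmax 0 s)).
    assert (Hth2 : Cont th2) by (apply cont_Rplus_max; auto).
    assert (HG2 : forall tau, 0 <= tau -> RInt (fun s => th2 s * kt (tau - s)) 0 tau = gt tau).
    { intros tau Htau. destruct (Hsol tau Htau) as [I [[pr Hpr] HI]].
      rewrite Hgt_eq by auto. rewrite HI. rewrite <- Hpr. rewrite <- RInt_Reals.
      assert (HI2 : RInt (fun s => th2 s * kt (tau - s)) 0 tau = RInt (fun s => th' s * dPsi (tau - s) O) 0 tau).
      { apply RInt_ext. intros s [Hs1 Hs2]. rewrite Rmin_left in Hs1 by lra. rewrite Rmax_right in Hs2 by lra.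
        unfold th2. rewrite Rmax_right by lra. rewrite Hkt_eq by lra. auto. }
      rewrite HI2. match goal with |- ?a = ?b => change (@eq R a b) end. lra. }
    set (dl := fun s => th2 s - th s).
    assert (Hdl : Cont dl) by (apply Cont_minus; auto).
    assert (HD : forall tau, 0 <= tau -> RInt (fun s => dl s * kt (tau - s)) 0 tau = 0).
    { intros tau Htau.
      assert (E : RInt (fun s => dl s * kt (tau - s)) 0 tau =
                  RInt (fun s => th2 s * kt (tau - s)) 0 tau - RInt (fun s => th s * kt (tau - s)) 0 tau).
      { rewrite <- (RInt_minus (V:=R_CompleteNormedModule)) by (apply exR, Cont_integrand; auto).
        apply RInt_ext. intros ? _. unfold dl, minus, plus, opp; simpl. ring. }
      rewrite E, HG2, HG by auto. lra. }
    assert (Hrel : forall y, 0 <= y -> dl y = - Pk (fun t => k' t * / c) dl y).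
    { intros y Hy.
      assert (Hz := deriv_zero_right _ _ _ (leibniz dl kt k' Hdl Hk' y) (fun s Hs => HD s ltac:(lra))).
      rewrite Pk_scal by auto. fold c in Hz.
      apply Rmult_eq_reg_l with c; auto. field_simplify; auto. lra. }
    assert (Hz := volt_uniq _ dl HK Hdl Hrel t Ht).
    unfold dl, th2 in Hz. rewrite Rmax_right in Hz by lra. lra.
Qed.
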